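(* Let $C$ be a program with total semantics and $e,e'$ expressions, and let $\Phi_{\langle C,e,e'\rangle}(f)(\sigma)=[\![e]\!](\sigma)\cdot f^\dagger([\![C]\!](\sigma))+[\![e']\!](\sigma)\cdot\eta(\sigma)$ for $f:\Sigma\to\mathcal W(\Sigma)$ and $\sigma\in\Sigma$. If $\Phi_{\langle C,e,e'\rangle}$ is a total function, then it is Scott continuous with respect to the pointwise order: $f_1\sqsubseteq^\bullet f_2$ iff $f_1(\sigma)\sqsubseteq f_2(\sigma)$ for all $\sigma\in\Sigma$.
   Context: $\mathcal A=\langle U,+,\cdot,\mathbf 0,\mathbf 1\rangle$ is a partial semiring ($+$ commutative, associative, possibly partial, unit $\mathbf 0$; $\cdot$ total, associative, unit $\mathbf 1$; two-sided distributivity; $\mathbf 0$ annihilates), naturally ordered ($u\le v$ iff $\exists w.\,u+w=v$ is a partial order), Scott continuous ($+$ and $\cdot$ preserve suprema of directed sets in each argument), with a top element. Infinite sums are suprema of finite partial sums. $\mathcal W(X)$: maps $m:X\to U$ with countable support $\{x:m(x)\ne\mathbf 0\}$ and defined mass, operations pointwise, $m_1\sqsubseteq m_2$ iff $m_1+m=m_2$ for some $m$. $\eta(x)(y)=\mathbf 1$ if $x=y$ else $\mathbf 0$; $f^\dagger(m)(y)=\sum_{x\in\mathrm{supp}(m)}m(x)\cdot f(x)(y)$. Programs over states $\Sigma$ are built from $\mathsf{skip}$, $;$, $+$, $\mathsf{assume}\ e$, iteration $C^{\langle e,e'\rangle}$ and atomic actions $a$ with $[\![a]\!]:\Sigma\to\mathcal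 W(\Sigma)$, with denotation $[\![C]\!]:\Sigma\to\mathcal W(\Sigma)$ (possibly partial because $+$ is partial). An expression $e$ is either a test $b$ (a Boolean combination of $\mathsf{true},\mathsf{false}$ and primitive tests $t\subseteq\Sigma$, with $[\![b]\!](\sigma)\in\{\mathbf 0,\mathbf 1\}$ and $[\![t]\!](\sigma)=\mathbf 1$ iff $\sigma\in t$) or a weight $u\in U$ with $[\![u]\!](\sigma)=u$. *)

(* Defs.v *)
From Stdlib Require Import List ClassicalEpsilon.
Import ListNotations.
Set Implicit Arguments.

Record psr := PSR {
  car :> Type;
  padd : car -> car -> option car;
  pmul : car -> car -> car;
  pzero : car;
  pone : car }.

Section PSR.
Variable A : psr.
Local Notation U := (car A).
Local Notation "u +? v" := (padd A u v) (at level 50).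
Local Notation "u * v" := (pmul A u v).

Definition obind {T S} (f : T -> option S) (o : option T) : option S :=
  match o with Some x => f x | None => None end.

Definition nle (u v : U) : Prop := exists w, u +? w = Some v.

Definition directed (D : U -> Prop) : Prop :=
  (exists d, D d) /\
  (forall d1 d2, D d1 -> D d2 -> exists d, D d /\ nle d1 d /\ nle d2 d).

Definition is_sup (P : U -> Prop) (s : U) : Prop :=
  (forall u, P u -> nle u s) /\ (forall b, (forall u, P u -> nle u b) -> nle s b).

Record psr_axioms : Prop := {
  padd_comm : forall u v, u +? v = v +? u;
  padd_assoc : forall u v w,
      obind (fun x => x +? w) (u +? v) = obind (fun y => u +? y) (v +? w);
  padd_0 : forall u, u +? pzero A = Some u;
  pmul_assoc : forall u v w, u * (v * w) = (u * v) * w;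
  pmul_1l : forall u, pone A * u = u;
  pmul_1r : forall u, u * pone A = u;
  distr_l : forall u v w s, v +? w = Some s -> (u * v) +? (u * w) = Some (u * s);
  distr_r : forall u v w s, v +? w = Some s -> (v * u) +? (w * u) = Some (s * u);
  pmul_0l : forall u, pzero A * u = pzero A;
  pmul_0r : forall u, u * pzero A = pzero A;
  (* natural order is a partial order (reflexive/transitive automatically) *)
  nle_antisym : forall u v, nle u v -> nle v u -> u = v;
  dcpo : forall D, directed D -> exists s, is_sup D s;
  (* Scott continuity of + in each argument (Kleene equality) *)
  padd_cont : forall u D s, directed D -> is_sup D s ->
      ((exists t, u +? s = Some t) <-> (forall d, D d -> exists t, u +? d = Some t)) /\
      (forall t, u +? s = Some t ->
         is_sup (fun v => exists d, D d /\ u +? d = Some v) t);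
  pmul_cont_l : forall u D s, directed D -> is_sup D s ->
      is_sup (fun v => exists d, D d /\ v = u * d) (u * s);
  pmul_cont_r : forall u D s, directed D -> is_sup D s ->
      is_sup (fun v => exists d, D d /\ v = d * u) (s * u);
  has_top : exists t, forall u, nle u t }.

Fixpoint lsum (l : list U) : option U :=
  match l with
  | [] => Some (pzero A)
  | u :: l' => obind (fun s => u +? s) (lsum l')
  end.

Definition finsum {I : Type} (F : I -> U) (S : I -> Prop) (v : U) : Prop :=
  exists l, NoDup l /\ (forall i, In i l -> S i) /\ lsum (map F l) = Some v.

Definition sum_defined {I : Type} (F : I -> U) (S : I -> Prop) : Prop :=
  forall l, NoDup l -> (forall i, In i l -> S i) -> exists v, lsum (map F l) = Some v.

Definition has_sum {I : Type} (F : I -> U) (S : I -> Prop) (s : U) : Prop :=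
  sum_defined F S /\ is_sup (finsum F S) s.

(** weighted multisets W(X): countable support, defined mass *)
Definition supp {X : Type} (m : X -> U) (x : X) : Prop := m x <> pzero A.

Definition countable_supp {X : Type} (m : X -> U) : Prop :=
  exists g : nat -> option X, forall x, supp m x -> exists n, g n = Some x.

Definition inW {X : Type} (m : X -> U) : Prop :=
  countable_supp m /\ exists s, has_sum m (supp m) s.

Definition wadd {X : Type} (m1 m2 m : X -> U) : Prop :=
  inW m /\ forall x, m1 x +? m2 x = Some (m x).

Definition wscale {X : Type} (u : U) (m : X -> U) : X -> U := fun x => u * m x.

Definition wle {X : Type} (m1 m2 : X -> U) : Prop :=
  exists m, inW m /\ wadd m1 m m2.

Definition eta {X : Type} (x : X) : X -> U :=
  fun y => if excluded_middle_informative (x = y) then pone A else pzero A.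

Definition kext {X Y : Type} (f : X -> Y -> U) (m : X -> U) (r : Y -> U) : Prop :=
  inW r /\ forall y, has_sum (fun x => m x * f x y) (supp m) (r y).

Definition isKer {S : Type} (f : S -> S -> U) : Prop := forall s, inW (f s).

Definition kle {S : Type} (f1 f2 : S -> S -> U) : Prop :=
  forall s, wle (f1 s) (f2 s).

Definition kdirected {S : Type} (D : (S -> S -> U) -> Prop) : Prop :=
  (exists f, D f) /\
  (forall f1 f2, D f1 -> D f2 -> exists f, D f /\ kle f1 f /\ kle f2 f).

Definition is_ksup {S : Type} (D : (S -> S -> U) -> Prop) (F : S -> S -> U) : Prop :=
  isKer F /\ (forall f, D f -> kle f F) /\
  (forall G, isKer G -> (forall f, D f -> kle f G) -> kle F G).

Inductive test (S : Type) :=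
| tTrue | tFalse | tPrim (t : S -> bool)
| tNot (b : test S) | tAnd (b1 b2 : test S) | tOr (b1 b2 : test S).

Fixpoint teval {S : Type} (b : test S) (s : S) : bool :=
  match b with
  | tTrue _ => true | tFalse _ => false | tPrim t => t s
  | tNot b => negb (teval b s)
  | tAnd b1 b2 => andb (teval b1 s) (teval b2 s)
  | tOr b1 b2 => orb (teval b1 s) (teval b2 s)
  end.

Inductive expr (S : Type) :=
| ETest (b : test S)
| EWeight (u : U).

Definition eeval {S : Type} (e : expr S) (s : S) : U :=
  match e with
  | ETest b => if teval b s then pone A else pzero A
  | EWeight _ u => u
  end.

Definition PhiR {S : Type} (c : S -> S -> U) (e e' : expr S)
    (f g : S -> S -> U) : Prop :=
  forall s, exists h, kext f (c s) h /\
    wadd (wscale (eeval e s) h) (wscale (eeval e' s) (eta s)) (g s).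

End PSR.

Arguments tTrue {S}. Arguments tFalse {S}.

(* Main.v *)
Require Import Defs.
From Stdlib Require Import List Permutation ClassicalEpsilon.
Import ListNotations.

Section L.
Variable A : psr.
Variable HA : psr_axioms A.
Local Notation U := (car A).
Local Notation "u +? v" := (padd A u v) (at level 50).
Local Notation "u * v" := (pmul A u v).
Local Notation le := (nle A).

Lemma add0l u : pzero A +? u = Some u.
Proof. rewrite (padd_comm HA). apply (padd_0 HA). Qed.

Lemma le_refl u : le u u.
Proof. exists (pzero A). apply (padd_0 HA). Qed.

Lemma le_trans a b c : le a b -> le b c -> le a c.
Proof.
  intros [w Hw] [w' Hw'].
  pose proof (padd_assoc HA a w w') as E. rewrite Hw in E. simpl in E.
  rewrite Hw' in E. destruct (w +? w') as [z|] eqn:Ez; simpl in E; try discriminate.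
  exists z. auto.
Qed.

Lemma le0 u : le (pzero A) u.
Proof. exists u. apply add0l. Qed.

Lemma le0_eq u : le u (pzero A) -> u = pzero A.
Proof. intros H. apply (nle_antisym HA); auto. apply le0. Qed.

Lemma le_addr a b t : a +? b = Some t -> le a t.
Proof. intros H; exists b; auto. Qed.

Lemma le_addl a b t : a +? b = Some t -> le b t.
Proof. intros H; exists a; rewrite (padd_comm HA); auto. Qed.

Lemma MA1 a a' b t' : le a a' -> a' +? b = Some t' ->
  exists t, a +? b = Some t /\ le t t'.
Proof.
  intros [w Hw] H.
  pose proof (padd_assoc HA a w b) as E1. rewrite Hw in E1. simpl in E1.
  rewrite H in E1. rewrite (padd_comm HA w b) in E1.
  pose proof (padd_assoc HA a b w) as E2. rewrite <- E1 in E2.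
  destruct (a +? b) as [t|]; simpl in E2; try discriminate.
  exists t; split; auto. exists w; auto.
Qed.

Lemma MA a a' b b' t' : le a a' -> le b b' -> a' +? b' = Some t' ->
  exists t, a +? b = Some t /\ le t t'.
Proof.
  intros H1 H2 H.
  destruct (MA1 _ _ _ _ H1 H) as [t1 [E1 L1]].
  rewrite (padd_comm HA) in E1.
  destruct (MA1 _ _ _ _ H2 E1) as [t [E L]].
  exists t; split. rewrite (padd_comm HA); auto. eapply le_trans; eauto.
Qed.

Lemma MM u a b : le a b -> le (u * a) (u * b).
Proof. intros [w Hw]. exists (u * w). eapply (distr_l HA); eauto. Qed.

Lemma sup_unique P s1 s2 : is_sup A P s1 -> is_sup A P s2 -> s1 = s2.
Proof.
  intros [U1 L1] [U2 L2]. apply (nle_antisym HA); auto.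
Qed.

Lemma sup_ext P Q s : (forall u, P u <-> Q u) -> is_sup A P s -> is_sup A Q s.
Proof.
  intros E [U1 L1]; split.
  - intros u Hu; apply U1, E; auto.
  - intros b Hb; apply L1; intros u Hu; apply Hb, E; auto.
Qed.

Lemma directed_image {I : Type} (R : I -> I -> Prop) (D : I -> Prop) (N : I -> U -> Prop) :
  (exists d, D d) ->
  (forall d1 d2, D d1 -> D d2 -> exists d, D d /\ R d1 d /\ R d2 d) ->
  (forall d, D d -> exists v, N d v) ->
  (forall d1 d2 v1 v2, D d1 -> D d2 -> R d1 d2 -> N d1 v1 -> N d2 v2 -> le v1 v2) ->
  directed A (fun v => exists d, D d /\ N d v).
Proof.
  intros [d0 H0] Hd Hex Hmon. split.
  - destruct (Hex d0 H0) as [v Hv]. exists v, d0; split; auto.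
  - intros v1 v2 [d1 [D1 N1]] [d2 [D2 N2]].
    destruct (Hd d1 d2 D1 D2) as [d [Dd [R1 R2]]].
    destruct (Hex d Dd) as [v Hv]. exists v. split. exists d; split; auto.
    split; [apply (Hmon d1 d) | apply (Hmon d2 d)]; auto.
Qed.

Lemma directed_map (P : U -> Prop) (g : U -> U) :
  directed A P -> (forall a b, le a b -> le (g a) (g b)) ->
  directed A (fun v => exists d, P d /\ v = g d).
Proof.
  intros [[d0 H0] Hd] Hg. split.
  - exists (g d0), d0; split; auto.
  - intros v1 v2 [d1 [P1 ->]] [d2 [P2 ->]].
    destruct (Hd d1 d2 P1 P2) as [d [Pd [L1 L2]]].
    exists (g d); split. exists d; split; auto. split; apply Hg; auto.
Qed.

Definition oadd (o1 o2 : option U) : option U :=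
  obind (fun x => obind (fun y => x +? y) o2) o1.

Lemma lsum_app l1 l2 : lsum A (l1 ++ l2) = oadd (lsum A l1) (lsum A l2).
Proof.
  induction l1 as [|a l1 IH]; simpl.
  - unfold oadd; simpl. destruct (lsum A l2); simpl; auto. rewrite add0l; auto.
  - rewrite IH. unfold oadd.
    destruct (lsum A l1) as [t1|]; simpl; auto.
    destruct (lsum A l2) as [t2|]; simpl.
    + rewrite <- (padd_assoc HA). destruct (a +? t1); simpl; auto.
    + destruct (a +? t1); simpl; auto.
Qed.

Lemma lsum_perm l l' : Permutation l l' -> lsum A l = lsum A l'.
Proof.
  induction 1; simpl; auto.
  - rewrite IHPermutation; auto.
  - destruct (lsum A l) as [t|]; simpl; auto.
    pose proof (padd_assoc HA y x t) as E1.
    pose proof (padd_assoc HA x y t) as E2.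
    rewrite (padd_comm HA y x) in E1. congruence.
  - congruence.
Qed.

Lemma lsum_mono {I : Type} (F1 F2 : I -> U) l v2 :
  (forall i, In i l -> le (F1 i) (F2 i)) -> lsum A (map F2 l) = Some v2 ->
  exists v1, lsum A (map F1 l) = Some v1 /\ le v1 v2.
Proof.
  revert v2; induction l as [|a l IH]; simpl; intros v2 Hle H.
  - exists (pzero A); split; auto. inversion H; apply le_refl.
  - destruct (lsum A (map F2 l)) as [t2|] eqn:E; simpl in H; try discriminate.
    destruct (IH t2) as [t1 [E1 L1]]; auto.
    rewrite E1; simpl. eapply MA; eauto.
Qed.

Definition notin {I : Type} (l : list I) (x : I) : bool :=
  if excluded_middle_informative (In x l) then false else true.

Lemma sublist_le {I : Type} (F : I -> U) l l' v' :
  NoDup l -> NoDup l' -> incl l l' -> lsum A (map F l') = Some v' ->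
  exists v, lsum A (map F l) = Some v /\ le v v'.
Proof.
  intros N N' Inc H.
  assert (P : Permutation l' (l ++ filter (notin l) l')).
  { apply NoDup_Permutation; auto.
    - apply NoDup_app; auto. apply NoDup_filter; auto.
      intros a Ha Hb. apply filter_In in Hb. destruct Hb as [_ Hb].
      unfold notin in Hb. destruct excluded_middle_informative; tauto || discriminate.
    - intros x; split; intros Hx.
      + apply in_or_app. destruct (classic (In x l)) as [Hl|Hl]; auto.
        right. apply filter_In. split; auto. unfold notin.
        destruct excluded_middle_informative; tauto.
      + apply in_app_or in Hx. destruct Hx as [Hx|Hx]; auto.
        apply filter_In in Hx; tauto. }
  apply (Permutation_map F) in P. apply lsum_perm in P.
  rewrite H, map_app, lsum_app in P. unfold oadd in P.
  destruct (lsum A (map F l)) as [v|]; simpl in P; try discriminate.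
  exists v; split; auto.
  destruct (lsum A (map F (filter (notin l) l'))); simpl in P; try discriminate.
  exists c; auto.
Qed.

Lemma lsum_fun (l : list U) v1 v2 : lsum A l = Some v1 -> lsum A l = Some v2 -> v1 = v2.
Proof. congruence. Qed.

Lemma finsum_directed {I : Type} (F : I -> U) (S : I -> Prop) :
  sum_defined A F S -> directed A (finsum A F S).
Proof.
  intros Hd. split.
  - exists (pzero A), []. split. constructor. split. simpl; tauto. reflexivity.
  - intros v1 v2 [l1 [N1 [S1 E1]]] [l2 [N2 [S2 E2]]].
    set (l3 := l1 ++ filter (notin l1) l2).
    assert (N3 : NoDup l3).
    { apply NoDup_app; auto. apply NoDup_filter; auto.
      intros a Ha Hb. apply filter_In in Hb. destruct Hb as [_ Hb].
      unfold notin in Hb. destruct excluded_middle_informative; tauto || discriminate. }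
    assert (S3 : forall i, In i l3 -> S i).
    { intros i Hi. apply in_app_or in Hi. destruct Hi as [Hi|Hi]; auto.
      apply filter_In in Hi; apply S2; tauto. }
    destruct (Hd l3 N3 S3) as [v3 E3].
    exists v3. split. exists l3; auto.
    split.
    + destruct (sublist_le F l1 l3 v3 N1 N3) as [v [Ev Lv]]; auto.
      intros x Hx; apply in_or_app; auto.
      replace v1 with v by congruence; auto.
    + destruct (sublist_le F l2 l3 v3 N2 N3) as [v [Ev Lv]]; auto.
      intros x Hx; apply in_or_app. destruct (classic (In x l1)); auto.
      right; apply filter_In; split; auto. unfold notin; destruct excluded_middle_informative; tauto.
      replace v2 with v by congruence; auto.
Qed.

Lemma IB {X : Type} (m m2 : X -> U) :
  (forall x, le (m x) (m2 x)) -> inW A m2 -> inW A m.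
Proof.
  intros Hle [[g Hg] [s [Hsd _]]].
  assert (Hs : forall x, supp A m x -> supp A m2 x).
  { intros x Hx E. apply Hx. apply le0_eq. rewrite <- E; auto. }
  split.
  - exists g. intros x Hx. apply Hg, Hs; auto.
  - assert (Hd : sum_defined A m (supp A m)).
    { intros l N Hl. destruct (Hsd l N) as [v Ev]. intros i Hi; apply Hs, Hl; auto.
      destruct (lsum_mono m m2 l v) as [v1 [E1 _]]; eauto. }
    destruct (dcpo HA (finsum_directed m (supp A m) Hd)) as [s' Hs'].
    exists s'. split; auto.
Qed.

Lemma DL {X : Type} (m1 m2 : X -> U) :
  (forall x, le (m1 x) (m2 x)) -> inW A m2 -> wle A m1 m2.
Proof.
  intros Hle HW.
  set (m := fun x => if excluded_middle_informative (m2 x = pzero A) then pzero A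
                     else proj1_sig (constructive_indefinite_description _ (Hle x))).
  assert (Hm : forall x, m1 x +? m x = Some (m2 x)).
  { intros x. unfold m. destruct excluded_middle_informative as [E|E].
    - pose proof (Hle x) as E1. rewrite E in E1|-*. apply le0_eq in E1.
      rewrite E1. apply (padd_0 HA).
    - destruct constructive_indefinite_description; simpl; auto. }
  assert (HmW : inW A m).
  { apply (IB m m2); auto. intros x. exists (m1 x). rewrite (padd_comm HA); auto. }
  exists m. split; auto. split; auto.
Qed.

Lemma wle_pt {X : Type} (m1 m2 : X -> U) : wle A m1 m2 -> forall x, le (m1 x) (m2 x).
Proof. intros [m [_ [_ H]]] x. exists (m x); auto. Qed.

Lemma kext_unique {X Y : Type} (f : X -> Y -> U) m h1 h2 :
  kext A f m h1 -> kext A f m h2 -> forall y, h1 y = h2 y.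
Proof.
  intros [_ H1] [_ H2] y. destruct (H1 y) as [_ S1]; destruct (H2 y) as [_ S2].
  eapply sup_unique; eauto.
Qed.

Lemma MK {X Y : Type} (f1 f2 : X -> Y -> U) m h1 h2 :
  (forall x y, le (f1 x y) (f2 x y)) -> kext A f1 m h1 -> kext A f2 m h2 ->
  forall y, le (h1 y) (h2 y).
Proof.
  intros Hle [_ H1] [_ H2] y. destruct (H1 y) as [_ [_ L1]]; destruct (H2 y) as [D2 [U2 _]].
  apply L1. intros v [l [N [Sl E]]].
  destruct (D2 l N Sl) as [v2 E2].
  destruct (lsum_mono (fun x => m x * f1 x y) (fun x => m x * f2 x y) l v2) as [v1 [E1 L]]; auto.
  intros i _; apply MM; auto.
  replace v with v1 by congruence. eapply le_trans; eauto.
  apply U2. exists l; auto.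
Qed.

Lemma mono {S : Type} (c : S -> S -> U) e e' f1 f2 g1 g2 :
  kle A f1 f2 -> PhiR c e e' f1 g1 -> PhiR c e e' f2 g2 -> kle A g1 g2.
Proof.
  intros Hk P1 P2 s.
  destruct (P1 s) as [h1 [K1 [_ W1]]]. destruct (P2 s) as [h2 [K2 [W2a W2]]].
  apply DL; auto. intros x. specialize (W1 x); specialize (W2 x). unfold wscale in *.
  assert (hle : le (h1 x) (h2 x)).
  { apply (MK f1 f2 (c s) h1 h2); auto. intros y z; apply wle_pt; auto. }
  destruct (MA _ _ _ _ _ (MM (eeval e s) _ _ hle) (le_refl _) W2) as [t [Et Lt]].
  replace (g1 s x) with t by congruence. auto.
Qed.

Section Cont.
Variable S : Type.
Variable D : (S -> S -> U) -> Prop.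
Variable F : S -> S -> U.
Hypothesis HDk : forall f, D f -> isKer A f.
Hypothesis HDd : kdirected A D.
Hypothesis HF : is_ksup A D F.

Lemma Dne : exists f, D f.
Proof. destruct HDd; auto. Qed.

Lemma DleF f : D f -> forall y x, le (f y x) (F y x).
Proof. intros Hf y x. destruct HF as [_ [H _]]. apply wle_pt, H; auto. Qed.

Lemma PSdir y x : directed A (fun v => exists f, D f /\ v = f y x).
Proof.
  destruct HDd as [H0 H1].
  apply (directed_image (kle A) D (fun f v => v = f y x)); auto.
  - intros d _; eauto.
  - intros d1 d2 v1 v2 _ _ R -> ->. apply wle_pt; auto.
Qed.

Lemma PS y x : is_sup A (fun v => exists f, D f /\ v = f y x) (F y x).
Proof.
  split.
  - intros u [f [Hf ->]]. apply DleF; auto.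
  - intros b Hb.
    assert (Hex : forall y x, exists v, is_sup A (fun v => exists f, D f /\ v = f y x) v).
    { intros y' x'. apply (dcpo HA), PSdir. }
    set (P := fun y x => proj1_sig (constructive_indefinite_description _ (Hex y x))).
    assert (HP : forall y x, is_sup A (fun v => exists f, D f /\ v = f y x) (P y x)).
    { intros y' x'. unfold P. destruct constructive_indefinite_description; auto. }
    assert (PF : forall y x, le (P y x) (F y x)).
    { intros y' x'. apply (HP y' x'). intros u [f [Hf ->]]. apply DleF; auto. }
    destruct HF as [HFk [_ HFl]].
    assert (HPk : isKer A P).
    { intros y'. apply (IB (P y') (F y')); auto. }
    assert (L : kle A F P).
    { apply HFl; auto. intros f Hf y'. apply DL; auto. intros x'.
      apply (HP y' x'). exists f; split; auto. }
    eapply le_trans. apply (wle_pt _ _ (L y)). apply (HP y x). auto.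
Qed.

Lemma Lsum (m : S -> U) x l T :
  lsum A (map (fun y => m y * F y x) l) = Some T ->
  is_sup A (fun w => exists f, D f /\ lsum A (map (fun y => m y * f y x) l) = Some w) T.
Proof.
  revert T. induction l as [|y l IH]; simpl; intros T HT.
  - inversion HT; subst. split.
    + intros u [f [_ E]]. inversion E; apply le_refl.
    + intros b Hb. destruct Dne as [f Hf]. apply Hb. exists f; auto.
  - destruct (lsum A (map (fun y => m y * F y x) l)) as [B|] eqn:EB; simpl in HT; try discriminate.
    specialize (IH B eq_refl).
    set (Pf := fun v => exists f, D f /\ v = f y x).
    set (Pa := fun v => exists d, Pf d /\ v = m y * d).
    assert (SA : is_sup A Pa (m y * F y x)) by (apply (pmul_cont_l HA); [apply PSdir | apply PS]).
    assert (DA : directed A Pa) by (apply directed_map; [apply PSdir | intros; apply MM; auto]).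
    assert (Def : forall f, D f -> exists w, lsum A (map (fun y => m y * f y x) (y :: l)) = Some w /\ le w T).
    { intros f Hf. apply (lsum_mono _ (fun y => m y * F y x)).
      intros i _; apply MM, DleF; auto. simpl. rewrite EB. simpl. auto. }
    assert (Defl : forall f, D f -> exists w, lsum A (map (fun y => m y * f y x) l) = Some w).
    { intros f Hf. destruct (Def f Hf) as [w [Ew _]]. simpl in Ew.
      destruct (lsum A (map (fun y => m y * f y x) l)); simpl in Ew; try discriminate; eauto. }
    assert (DB : directed A (fun w => exists f, D f /\ lsum A (map (fun y => m y * f y x) l) = Some w)).
    { destruct HDd as [H0 H1].
      apply (directed_image (kle A) D (fun f w => lsum A (map (fun y => m y * f y x) l) = Some w)); auto.
      intros d1 d2 v1 v2 _ _ R E1 E2.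
      destruct (lsum_mono (fun y => m y * d1 y x) (fun y => m y * d2 y x) l v2) as [v [Ev Lv]]; auto.
      intros i _; apply MM, wle_pt; auto. replace v1 with v by congruence; auto. }
    split.
    + intros w [f [Hf Ew]]. destruct (Def f Hf) as [w' [Ew' L]]. simpl in Ew'. simpl in Ew.
      replace w with w' by congruence. auto.
    + intros b Hb.
      destruct (padd_cont HA (m y * F y x) DB IH) as [_ Hc].
      apply (Hc T HT). intros v [d [[g [Hg Eg]] Ev]].
      rewrite (padd_comm HA) in Ev.
      destruct (padd_cont HA d DA SA) as [_ Hc2].
      apply (Hc2 v Ev). intros v' [d' [[d'' [[f [Hf ->]] ->]] Ev']].
      destruct HDd as [_ H1]. destruct (H1 f g Hf Hg) as [k [Hk [Rf Rg]]].
      destruct (Def k Hk) as [wk [Ewk _]].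
      assert (Lwk : le wk b) by (apply Hb; exists k; split; auto).
      simpl in Ewk.
      destruct (lsum A (map (fun y => m y * k y x) l)) as [Bk|] eqn:EBk; simpl in Ewk; try discriminate.
      assert (Lg : le d Bk).
      { destruct (lsum_mono (fun y => m y * g y x) (fun y => m y * k y x) l Bk) as [v0 [Ev0 Lv0]]; auto.
        intros i _; apply MM, wle_pt; auto. replace d with v0 by congruence; auto. }
      rewrite (padd_comm HA) in Ewk.
      destruct (MA _ _ _ _ _ Lg (MM (m y) _ _ (wle_pt _ _ (Rf y) x)) Ewk) as [t [Et Lt]].
      replace v' with t by congruence. eapply le_trans; eauto.
Qed.

End Cont.
End L.

Theorem lemmaA5 (A : psr) (HA : psr_axioms A) (Sigma : Type)
    (c : Sigma -> Sigma -> car A) (Hc : isKer A c) (e e' : expr A Sigma)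
    (Htot : forall f, isKer A f -> exists g, PhiR c e e' f g) :
  (forall f1 f2 g1 g2, isKer A f1 -> isKer A f2 -> kle A f1 f2 ->
      PhiR c e e' f1 g1 -> PhiR c e e' f2 g2 -> kle A g1 g2) /\
  (forall (D : (Sigma -> Sigma -> car A) -> Prop) F G,
      (forall f, D f -> isKer A f) -> kdirected A D -> is_ksup A D F ->
      PhiR c e e' F G ->
      is_ksup A (fun g => exists f, D f /\ PhiR c e e' f g) G).
Proof.
  split.
  - intros f1 f2 g1 g2 _ _ Hk P1 P2. eapply (mono A HA); eauto.
  - intros D F G HDk HDd HF PG. split; [|split].
    + intros s; destruct (PG s) as [h [_ [W _]]]; exact W.
    + intros g [f [Hf Pf]]. eapply (mono A HA); eauto. destruct HF as [_ [H _]]; apply H; auto.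
    + intros H HH Hub s. apply (DL A HA); auto. intros x.
      destruct (PG s) as [hF [KF [_ WF]]]. specialize (WF x). unfold wscale in WF.
      set (Ph := fun v => exists f, D f /\ exists h, kext A f (c s) h /\ v = h x).
      assert (DPh : directed A Ph).
      { destruct HDd as [H0 H1].
        apply (directed_image A (kle A) D (fun f v => exists h, kext A f (c s) h /\ v = h x)); auto.
        - intros f Hf. destruct (Htot f (HDk f Hf)) as [g Pg].
          destruct (Pg s) as [h [Kh _]]. eauto.
        - intros d1 d2 v1 v2 _ _ R [h1 [K1 ->]] [h2 [K2 ->]].
          apply (MK A HA d1 d2 (c s) h1 h2); auto. intros y z; apply wle_pt; auto. }
      assert (SPh : is_sup A Ph (hF x)).
      { split.
        - intros u [f [Hf [h [Kh ->]]]].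
          apply (MK A HA f F (c s) h hF); auto. intros y z. apply (DleF A Sigma D F HF); auto.
        - intros b Hb. destruct KF as [_ KF]. destruct (KF x) as [_ [_ L]]. apply L.
          intros v [l [N [Sl E]]].
          destruct (Lsum A HA Sigma D F HDd HF (c s) x l v E) as [_ L2]. apply L2.
          intros w [f [Hf Ew]].
          destruct (Htot f (HDk f Hf)) as [g Pg]. destruct (Pg s) as [h [Kh _]].
          eapply (le_trans A HA). 2: apply Hb; exists f; split; [auto | exists h; split; eauto].
          destruct Kh as [_ Kh]. destruct (Kh x) as [_ [U2 _]]. apply U2.
          exists l; auto. }
      pose proof (pmul_cont_l HA (eeval e s) DPh SPh) as SM.
      pose proof (directed_map A Ph (pmul A (eeval e s)) DPh (MM A HA (eeval e s))) as DM.
      rewrite (padd_comm HA) in WF.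
      destruct (padd_cont HA (pmul A (eeval e' s) (eta A s x)) DM SM) as [_ Hcc].
      apply (Hcc _ WF). intros v [d [[d' [[f [Hf [h [Kh ->]]]] ->]] Ev]].
      destruct (Htot f (HDk f Hf)) as [g Pg]. destruct (Pg s) as [h' [Kh' [_ Wg]]].
      specialize (Wg x). unfold wscale in Wg.
      rewrite <- (kext_unique A HA _ _ _ _ Kh Kh' x) in Wg. rewrite (padd_comm HA) in Wg.
      replace v with (g s x) by congruence.
      apply wle_pt. apply Hub. exists f; split; auto.
Qed.
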